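(* Let $\pi$ be a projective plane of order $q$ and let $\phi$ be an embedding of the complete bipartite graph $K_{q,q}$ into $\pi$. Then for any subplane $\pi_0$ of $\pi$ of order $n$, the set of image points $\phi(V(K_{q,q}))$ contains at most $2n$ points of $\pi_0$.
   Context: A finite projective plane of order $q$ has $q^2+q+1$ points and lines, $q+1$ points on each line and $q+1$ lines through each point; any two distinct points lie on a unique line and any two lines meet in a unique point. A subplane of order $n$ is a set of points and lines of $\pi$ forming a projective plane of order $n$ under the inherited incidence. An embedding of a simple graph $G=(V,E)$ into $\pi$ is an injective map $\phi$ from $V$ to the points of $\pi$ such that the induced map sending an edge $ab$ to the line through $\phi(a),\phi(b)$ is injective on $E$. *)

(* Defs.v *)
From mathcomp Require Import all_boot.
Set Implicit Arguments. Unset Strict Implicit. Unset Printing Implicit Defensive.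

(* As is standard, the order of a projective plane is at least 2. *)
Definition is_proj_plane (P L : finType) (I : P -> L -> bool)
    (Ps : {set P}) (Ls : {set L}) (n : nat) : Prop :=
  2 <= n /\
  #|Ps| = n ^ 2 + n + 1 /\
  #|Ls| = n ^ 2 + n + 1 /\
  (forall l, l \in Ls -> #|[set x in Ps | I x l]| = n.+1) /\
  (forall x, x \in Ps -> #|[set l in Ls | I x l]| = n.+1) /\
  (forall x y, x \in Ps -> y \in Ps -> x != y ->
     exists! l, l \in Ls /\ I x l /\ I y l) /\
  (forall l m, l \in Ls -> m \in Ls -> l != m ->
     exists! x, x \in Ps /\ I x l /\ I x m).

Definition projective_plane (P L : finType) (I : P -> L -> bool) (q : nat) :=
  is_proj_plane I [set: P] [set: L] q.

Definition subplane (P L : finType) (I : P -> L -> bool)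
    (Ps : {set P}) (Ls : {set L}) (n : nat) :=
  is_proj_plane I Ps Ls n.

Definition line_through (P L : finType) (I : P -> L -> bool) (x y : P)
  : option L := [pick l | I x l && I y l].

Definition Kqq (q : nat) : rel ('I_q + 'I_q) :=
  fun u v => match u, v with
             | inl _, inr _ | inr _, inl _ => true
             | _, _ => false
             end.

Definition graph_embedding (V P L : finType) (adj : rel V)
    (I : P -> L -> bool) (phi : V -> P) : Prop :=
  injective phi /\
  (forall a b c d, adj a b -> adj c d ->
     line_through I (phi a) (phi b) = line_through I (phi c) (phi d) ->
     [set a; b] = [set c; d]).

(* Main.v *)
Require Import Defs.
From mathcomp Require Import all_boot.
From mathcomp Require Import zify.
Set Implicit Arguments.

Lemma pp_line (P L : finType) (I : P -> L -> bool) q :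
  projective_plane I q -> forall x y, x != y -> exists l, I x l /\ I y l.
Proof.
move=> [_ [_ [_ [_ [_ [hpts _]]]]]] x y hxy.
have [l [[_ [h1 h2]] _]] := hpts x y (in_setT x) (in_setT y) hxy.
by exists l.
Qed.

Lemma pp_uniq (P L : finType) (I : P -> L -> bool) q :
  projective_plane I q -> forall x y l1 l2, x != y ->
  I x l1 -> I y l1 -> I x l2 -> I y l2 -> l1 = l2.
Proof.
move=> [_ [_ [_ [_ [_ [hpts _]]]]]] x y l1 l2 hxy a1 b1 a2 b2.
have [l [_ hu]] := hpts x y (in_setT x) (in_setT y) hxy.
rewrite -(hu l1) ?(hu l2) //; split => //; exact: in_setT.
Qed.

Lemma lt_some (P L : finType) (I : P -> L -> bool) q :
  projective_plane I q -> forall x y l, x != y -> I x l -> I y l ->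
  line_through I x y = Some l.
Proof.
move=> pp x y l hxy hx hy; rewrite /line_through.
case: pickP => [l' /andP [h1 h2]|h].
  by rewrite (pp_uniq pp _ _ _ _ hxy h1 h2 hx hy).
by move: (h l); rewrite hx hy.
Qed.

Lemma sp_line (P L : finType) (I : P -> L -> bool) (Ps : {set P}) (Ls : {set L}) n :
  subplane I Ps Ls n -> forall x y, x \in Ps -> y \in Ps -> x != y ->
  exists l, l \in Ls /\ I x l /\ I y l.
Proof.
move=> [_ [_ [_ [_ [_ [hpts _]]]]]] x y hx hy hxy.
by have [l [h _]] := hpts x y hx hy hxy; exists l.
Qed.

Lemma K1 (P L : finType) (I : P -> L -> bool) q (Ps : {set P}) (Ls : {set L}) n :
  projective_plane I q -> subplane I Ps Ls n -> forall l,
  #|[set x in Ps | I x l]| <= n.+1.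
Proof.
move=> pp sp l.
case: (leqP #|[set x in Ps | I x l]| 1) => [h|]; first exact: leq_trans h _.
case/card_gt1P => x [y [hx hy hxy]].
rewrite !inE in hx hy; case/andP: hx => xP xl; case/andP: hy => yP yl.
have [l' [l'L [xl' yl']]] := sp_line sp xP yP hxy.
have -> : l = l' by exact: (pp_uniq pp _ _ _ _ hxy xl yl xl' yl').
by case: sp => [_ [_ [_ [hl _]]]]; rewrite hl.
Qed.

Lemma P3 (P L : finType) (I : P -> L -> bool) q (a b : 'I_q -> P) :
  projective_plane I q -> (forall i j, a i != b j) ->
  (forall i i' j l, i != i' -> I (a i) l -> I (a i') l -> I (b j) l -> False) ->
  forall j l1 l2, I (b j) l1 -> I (b j) l2 ->
  (forall i, ~~ I (a i) l1) -> (forall i, ~~ I (a i) l2) -> l1 = l2.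
Proof.
move=> pp hab H2 j l1 l2 h1 h2 n1 n2.
case: (eqVneq l1 l2) => // hne; exfalso.
pose f i := odflt l1 [pick l | I (a i) l && I (b j) l].
have fP : forall i, I (a i) (f i) && I (b j) (f i).
  move=> i; rewrite /f; case: pickP => [l //|h].
  have [l [e1 e2]] := pp_line pp _ _ (hab i j).
  by move: (h l); rewrite e1 e2.
have finj : injective f.
  move=> i i' e; case: (eqVneq i i') => // nei; exfalso.
  have /andP [u1 u2] := fP i; have /andP [u3 _] := fP i'.
  rewrite -e in u3; exact: (H2 i i' j (f i) nei u1 u3 u2).
have sub : l1 |: (l2 |: (f @: [set: 'I_q])) \subset [set l in [set: L] | I (b j) l].
  apply/subsetP => l; rewrite !inE => /or3P [/eqP->|/eqP->|/imsetP [i _ ->]] //.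
  by case/andP: (fP i).
have := subset_leq_card sub.
case: pp => [_ [_ [_ [_ [hp _]]]]]; rewrite hp ?inE //.
rewrite cardsU1 cardsU1 card_imset // cardsT card_ord.
have nim : forall l, (forall i, ~~ I (a i) l) -> l \notin f @: [set: 'I_q].
  move=> l nl; apply/imsetP => [[i _ e]].
  by case/andP: (fP i); rewrite -e (negbTE (nl i)).
rewrite !inE negb_or hne (nim _ n1) (nim _ n2) /=.
by rewrite addnA ltnn.
Qed.

Lemma side (P L : finType) (I : P -> L -> bool) q (Ps : {set P}) (Ls : {set L}) n
  (a b : 'I_q -> P) :
  projective_plane I q -> subplane I Ps Ls n ->
  injective b -> (forall i j, a i != b j) ->
  (forall i j j' l, j != j' -> I (a i) l -> I (b j) l -> I (b j') l -> False) ->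
  (forall i i' j l, i != i' -> I (a i) l -> I (a i') l -> I (b j) l -> False) ->
  #|[set j | b j \in Ps]| <= n.+1 /\
  (1 < #|[set i | a i \in Ps]| -> #|[set j | b j \in Ps]| <= n).
Proof.
move=> pp sp binj hab H1 H2; split.
  case: (leqP #|[set j | b j \in Ps]| 1) => [h|]; first exact: leq_trans h _.
  case/card_gt1P => j [j' [hj hj' nej]]; rewrite !inE in hj hj'.
  have nbj : b j != b j' by rewrite (inj_eq binj).
  have [l [lj lj']] := pp_line pp _ _ nbj.
  have noA : forall l0 k, k != j -> I (b j) l0 -> I (b k) l0 -> forall i, ~~ I (a i) l0.
    move=> l0 k nek u v i; apply/negP => w; by apply: (H1 i j k l0 _ w u v); rewrite eq_sym.
  have sub : b @: [set j | b j \in Ps] \subset [set x in Ps | I x l].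
    apply/subsetP => x /imsetP [k]; rewrite inE => hk ->; rewrite inE hk /=.
    case: (eqVneq k j) => [->//|nkj].
    have nbk : b j != b k by rewrite (inj_eq binj) eq_sym.
    have [m [mj mk]] := pp_line pp _ _ nbk.
    have -> : l = m.
      apply: (@P3 _ _ _ _ a b pp hab H2 _ _ _ lj mj).
        by apply: (noA l j') => //; rewrite eq_sym.
      exact: (noA m k).
    done.
  apply: leq_trans (K1 pp sp l); rewrite -(card_imset _ binj).
  exact: subset_leq_card.
case/card_gt1P => i [i' [hi hi' nei]]; rewrite !inE in hi hi'.
have nai : a i != a i'.
  apply/eqP => e; have [l [u v]] := pp_line pp _ _ (hab i i).
  by apply: (H2 i i' i l nei u _ v); rewrite -e.
have [l0 [l0L [l0i l0i']]] := sp_line sp hi hi' nai.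
pose g j := odflt l0 [pick l in Ls | I (a i) l && I (b j) l].
have gP : forall j, b j \in Ps -> [&& g j \in Ls, I (a i) (g j) & I (b j) (g j)].
  move=> j hj; rewrite /g; case: pickP => [l /andP [-> ->] //|h].
  have [l [lL [u v]]] := sp_line sp hi hj (hab i j).
  by move: (h l); rewrite lL u v.
have ginj : {in [set j | b j \in Ps] &, injective g}.
  move=> j j'; rewrite !inE => hj hj' e; case: (eqVneq j j') => // nej; exfalso.
  case/and3P: (gP j hj) => _ u v; case/and3P: (gP j' hj') => _ _ w.
  rewrite -e in w; exact: (H1 i j j' (g j) nej u v w).
have sub : g @: [set j | b j \in Ps] \subset [set l in Ls | I (a i) l] :\ l0.
  apply/subsetP => l /imsetP [j]; rewrite inE => hj ->.
  case/and3P: (gP j hj) => gL u v; rewrite !inE gL u andbT /= andbT.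
  apply/eqP => e; rewrite e in v; exact: (H2 i i' j l0 nei l0i l0i' v).
have := subset_leq_card sub; rewrite card_in_imset //.
have := cardsD1 l0 [set l in Ls | I (a i) l].
case: sp => [_ [_ [_ [_ [hp _]]]]]; rewrite hp // !inE l0L l0i /= add1n => [[<-]].
done.
Qed.

Unset Implicit Arguments.

Theorem corollary4p12 (P L : finType) (I : P -> L -> bool) (q : nat)
    (phi : 'I_q + 'I_q -> P) (Ps : {set P}) (Ls : {set L}) (n : nat) :
  projective_plane I q ->
  graph_embedding (@Kqq q) I phi ->
  subplane I Ps Ls n ->
  #|Ps :&: (phi @: [set: 'I_q + 'I_q])| <= 2 * n.
Proof.
move=> pp [phinj phedge] sp.
pose a i := phi (inl i); pose b j := phi (inr j).
have hab : forall i j, a i != b j by move=> i j; apply/eqP => /phinj.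
have ainj : injective a by move=> i i' /phinj [].
have binj : injective b by move=> i i' /phinj [].
have H1 : forall i j j' l, j != j' -> I (a i) l -> I (b j) l -> I (b j') l -> False.
  move=> i j j' l nej u v w.
  have e1 := lt_some pp _ _ _ (hab i j) u v; have e2 := lt_some pp _ _ _ (hab i j') u w.
  have := phedge (inl i) (inr j) (inl i) (inr j') erefl erefl.
  rewrite /= e1 e2 => /(_ erefl) /setP /(_ (inr j)); rewrite !inE eqxx orbT.
  move=> /esym /orP [] /eqP // [] /eqP; by rewrite (negbTE nej).
have H2 : forall i i' j l, i != i' -> I (a i) l -> I (a i') l -> I (b j) l -> False.
  move=> i i' j l nei u v w.
  have e1 := lt_some pp _ _ _ (hab i j) u w; have e2 := lt_some pp _ _ _ (hab i' j) v w.
  have := phedge (inl i) (inr j) (inl i') (inr j) erefl erefl.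
  rewrite /= e1 e2 => /(_ erefl) /setP /(_ (inl i)); rewrite !inE eqxx /=.
  move=> /esym /orP [] /eqP // [] e; by move: nei; rewrite e eqxx.
have [sB1 sB2] := @side _ _ _ _ _ _ _ a b pp sp binj hab H1 H2.
have hba : forall j i, b j != a i by move=> j i; rewrite eq_sym.
have H1' : forall j i i' l, i != i' -> I (b j) l -> I (a i) l -> I (a i') l -> False.
  move=> j i i' l nei u v w; exact: (H2 i i' j l nei v w u).
have H2' : forall j j' i l, j != j' -> I (b j) l -> I (b j') l -> I (a i) l -> False.
  move=> j j' i l nej u v w; exact: (H1 i j j' l nej w u v).
have [sA1 sA2] := @side _ _ _ _ _ _ _ b a pp sp ainj hba H1' H2'.
have sub : Ps :&: (phi @: [set: 'I_q + 'I_q]) \subset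
    a @: [set i | a i \in Ps] :|: b @: [set j | b j \in Ps].
  apply/subsetP => x; rewrite !inE => /andP [xP /imsetP [[i|j] _ e]]; rewrite e in xP *.
    by apply/orP; left; apply/imsetP; exists i => //; rewrite inE.
  by apply/orP; right; apply/imsetP; exists j => //; rewrite inE.
apply: leq_trans (subset_leq_card sub) _.
apply: leq_trans (leq_card_setU _ _) _.
have := leq_imset_card a [set i | a i \in Ps].
have := leq_imset_card b [set j | b j \in Ps].
case: pp => hq _.
case: sp => hn _.
case: (leqP #|[set i | a i \in Ps]| 1) => ha;
case: (leqP #|[set j | b j \in Ps]| 1) => hb.
- by move=> h1 h2; lia.
- by move=> h1 h2; lia.
- by move=> h1 h2; lia.
- by have := sA2 hb; have := sB2 ha; move=> h3 h4 h1 h2; lia.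
Qed.
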